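(* Let $(R,\mathfrak m,k)$ be a commutative noetherian local ring with $\mathfrak m^4=0$ and $\mu(\mathfrak m)=e\ge3$. (1) If $H_R(-1)=0$ and an exact zero divisor $a$ lies in $\mathfrak m\smallsetminus\mathfrak m^2$, then every complementary divisor of $a$ also lies in $\mathfrak m\smallsetminus\mathfrak m^2$. (2) If $\mu(\mathfrak m^3)+2\le e$, then no non-zero exact zero divisor of $R$ is contained in $\mathfrak m^2$.
   Context: $H_R(t)=\sum_{n\ge0}\operatorname{rank}_k(\mathfrak m^n/\mathfrak m^{n+1})t^n$ is the Hilbert series of $R$, and $\mu(N)$ is the minimal number of generators of $N$. An element $a\in R$ is an exact zero divisor if $R\neq(0:_R a)\cong R/aR\neq0$; equivalently there exists $b\in R$ with $(0:_R a)=bR$ and $(0:_R b)=aR$, and any such $b$ is called a complementary divisor of $a$. *)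

(* Defs.v *)
From HB Require Import structures.
From mathcomp Require Import all_boot all_order all_algebra.
Set Implicit Arguments. Unset Strict Implicit. Unset Printing Implicit Defensive.
Import Order.TTheory GRing.Theory Num.Theory.
Local Open Scope ring_scope.

Section CommAlg.
Variable R : comUnitRingType.

Definition same_set (I J : R -> Prop) : Prop := forall x, I x <-> J x.

Definition is_ideal (I : R -> Prop) : Prop :=
  I 0 /\ (forall x y, I x -> I y -> I (x + y)) /\ (forall r x, I x -> I (r * x)).

Definition gen (s : seq R) : R -> Prop :=
  fun x => exists c : 'I_(size s) -> R, x = \sum_(i < size s) c i * s`_i.

Definition noetherian : Prop :=
  forall I, is_ideal I -> exists s : seq R, same_set I (gen s).

(* local: the non-units are closed under addition (they then form the
   unique maximal ideal m) *)
Definition local_ring : Prop :=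
  forall x y : R, x \notin GRing.unit -> y \notin GRing.unit -> (x + y) \notin GRing.unit.

Definition maxid : R -> Prop := fun x : R => x \notin GRing.unit.

Definition mpow (n : nat) : R -> Prop :=
  fun x => exists (N : nat) (r : 'I_N -> R) (a : 'I_N -> 'I_n -> R),
    (forall i j, maxid (a i j)) /\ x = \sum_(i < N) r i * \prod_(j < n) a i j.

Definition min_gens (I : R -> Prop) (d : nat) : Prop :=
  (exists s : seq R, size s = d /\ same_set I (gen s)) /\
  (forall s : seq R, same_set I (gen s) -> (d <= size s)%N).

(* rank_k (m^n / m^(n+1)) = d : the minimal size of a spanning family of the
   k-vector space m^n/m^(n+1) (k = R/m acts through R since m m^n <= m^(n+1)) *)
Definition spans_quot (n : nat) (s : seq R) : Prop :=
  (forall i, (i < size s)%N -> mpow n s`_i) /\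
  (forall y, mpow n y -> exists c : 'I_(size s) -> R,
      mpow n.+1 (y - \sum_(i < size s) c i * s`_i)).

Definition rank_quot (n d : nat) : Prop :=
  (exists s : seq R, size s = d /\ spans_quot n s) /\
  (forall s : seq R, spans_quot n s -> (d <= size s)%N).

Definition ann (a : R) : R -> Prop := fun x => x * a = 0.

(* exact zero divisor: R <> (0:a), R/aR <> 0, and (0:a) ≅ R/aR, the
   isomorphism being given (first isomorphism theorem) by an R-linear
   surjection phi : R -> (0:a) with kernel aR *)
Definition exact_zero_divisor (a : R) : Prop :=
  ~ same_set (ann a) (fun _ => True) /\
  ~ gen [:: a] 1 /\
  exists phi : R -> R,
    (forall x y, phi (x + y) = phi x + phi y) /\
    (forall r x, phi (r * x) = r * phi x) /\
    same_set (fun y => exists x, phi x = y) (ann a) /\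
    same_set (fun x => phi x = 0) (gen [:: a]).

Definition compl_divisor (a b : R) : Prop :=
  same_set (ann a) (gen [:: b]) /\ same_set (ann b) (gen [:: a]).

End CommAlg.

(* Main.v *)
Require Import Defs.
From HB Require Import structures.
From mathcomp Require Import all_boot all_order all_algebra.
From mathcomp Require Import ring zify.
From Stdlib Require Import IndefiniteDescription.
Import Order.TTheory GRing.Theory Num.Theory.
Local Open Scope ring_scope.
Set Implicit Arguments. Unset Strict Implicit. Unset Printing Implicit Defensive.

Lemma maxid0 (R : comUnitRingType) : @maxid R 0.
Proof. by rewrite /maxid unitr0. Qed.

Lemma maxidMl (R : comUnitRingType) (r x : R) : maxid x -> maxid (r * x).
Proof. by rewrite /maxid unitrM => /negPf ->; rewrite andbF. Qed.

Lemma maxidMr (R : comUnitRingType) (r x : R) : maxid x -> maxid (x * r).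
Proof. by rewrite mulrC; apply: maxidMl. Qed.

Lemma maxid_sum (R : comUnitRingType) (Hloc : local_ring R) n (F : 'I_n -> R) :
  (forall i, maxid (F i)) -> maxid (\sum_i F i).
Proof.
move=> HF; apply: (big_ind (@maxid R)); [exact: maxid0| |done].
by move=> x y; apply: Hloc.
Qed.

Lemma mpow0 (R : comUnitRingType) n : @mpow R n 0.
Proof.
exists 0%N, (fun _ => 0), (fun _ _ => 0); split; first by case.
by rewrite big_ord0.
Qed.

Lemma mpowZ (R : comUnitRingType) n (r y : R) : mpow n y -> mpow n (r * y).
Proof.
move=> [N [c [a [Ha ->]]]]; exists N, (fun i => r * c i), a; split => //.
by rewrite mulr_sumr; apply: eq_bigr => i _; rewrite mulrA.
Qed.

Lemma mpowM1 (R : comUnitRingType) n (x y : R) :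
  maxid x -> mpow n y -> mpow n.+1 (x * y).
Proof.
move=> Hx [N [c [a [Ha ->]]]].
exists N, c, (fun i j => match unlift ord0 j with Some j' => a i j' | None => x end).
split.
  by move=> i j; case: (unlift ord0 j).
rewrite mulr_sumr; apply: eq_bigr => i _.
rewrite big_ord_recl unlift_none.
under [X in _ = _ * (_ * X)]eq_bigr do rewrite liftK.
by rewrite mulrCA.
Qed.

Lemma mpow1_maxid (R : comUnitRingType) (Hloc : local_ring R) (x : R) :
  mpow 1 x -> maxid x.
Proof.
move=> [N [c [a [Ha ->]]]]; apply: maxid_sum => // i.
by rewrite big_ord1; apply: maxidMl.
Qed.

Lemma maxid_mpow1 (R : comUnitRingType) (x : R) : maxid x -> mpow 1 x.
Proof.
move=> Hx; exists 1%N, (fun _ => 1), (fun _ _ => x); split => //.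
by rewrite !big_ord1 mul1r.
Qed.

Lemma mpow_kill (R : comUnitRingType) (H4 : forall x : R, mpow 4 x -> x = 0) (x y : R) :
  mpow 2 x -> mpow 2 y -> x * y = 0.
Proof.
move=> [N [c [a [Ha ->]]]] Hy.
rewrite mulr_suml big1 // => i _.
rewrite !big_ord_recl big_ord0 mulr1 -!mulrA; apply: H4.
apply: mpowZ; apply: mpowM1 => //; exact: mpowM1.
Qed.

Lemma gen_nat (R : comUnitRingType) (s : seq R) x :
  gen s x <-> exists c : nat -> R, x = \sum_(i < size s) c i * s`_i.
Proof.
split.
  move=> [c ->].
  exists (fun i => match insub i with Some o => c o | None => 0 end).
  apply: eq_bigr => i _; case: insubP => [o _ /val_inj -> //|]; by rewrite ltn_ord.
by move=> [c ->]; exists (fun i => c (val i)).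
Qed.

Lemma gen_nth (R : comUnitRingType) (s : seq R) i : (i < size s)%N -> gen s s`_i.
Proof.
move=> Hi; apply/gen_nat; exists (fun j => (j == i)%:R).
rewrite (bigD1 (Ordinal Hi)) //= eqxx mul1r big1 ?addr0 // => j Hj.
suff /negPf -> : (val j != i) by rewrite mul0r.
by apply: contra Hj => /eqP Hj; apply/eqP; apply: val_inj.
Qed.

Lemma gen1 (R : comUnitRingType) (a y : R) : gen [:: a] y <-> exists r, y = r * a.
Proof.
split; first by move=> [c ->]; rewrite big_ord1; exists (c ord0).
by move=> [r ->]; exists (fun _ => r); rewrite big_ord1.
Qed.

Definition gb (R : comUnitRingType) (q : R) (n : nat) (f : nat -> R) (x : R) :=
  exists (b : R) (c : nat -> R), x = b * q + \sum_(i < n) c i * f i.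

Lemma gen_gb (R : comUnitRingType) (q : R) n (g : nat -> R) x :
  gen (q :: mkseq g n) x <-> gb q n g x.
Proof.
rewrite gen_nat /gb /=; rewrite size_mkseq; split.
  move=> [c ->]; exists (c 0%N), (fun i => c i.+1).
  rewrite big_ord_recl /=; congr (_ + _); apply: eq_bigr => i _.
  by rewrite /bump add0n nth_mkseq.
move=> [b [c ->]]; exists (fun i => if i is i'.+1 then c i' else b).
rewrite big_ord_recl /=; congr (_ + _); apply: eq_bigr => i _.
by rewrite /bump add0n nth_mkseq.
Qed.

Lemma gb_maxid (R : comUnitRingType) (Hloc : local_ring R) (q : R) n f x :
  maxid q -> (forall i, (i < n)%N -> maxid (f i)) -> gb q n f x -> maxid x.
Proof.
move=> Hq Hf [b [c ->]]; apply: (Hloc); first exact: (maxidMl b Hq).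
apply: (maxid_sum Hloc) => i; apply: (maxidMl (c i)); exact: Hf (ltn_ord i).
Qed.

Lemma elim_lemma (R : comUnitRingType) (Hloc : local_ring R) d :
  forall n (c : nat -> nat -> R), (d < n)%N ->
  exists lam : nat -> R, (exists k, (k < n)%N /\ lam k \is a GRing.unit) /\
    forall j, (j < d)%N -> maxid (\sum_(i < n) lam i * c i j).
Proof.
elim: d => [|d IH] n c Hn.
  by exists (fun _ => 1); split; [exists 0%N; rewrite unitr1|].
case: (boolP [exists i : 'I_n, c i 0%N \is a GRing.unit]) => Hex.
  case: n Hn Hex => [//|n] Hn /existsP [k Hk].
  set u := c k 0%N.
  have Hn' : (d < n)%N by [].
  pose c' i j := c (bump k i) j.+1 - c (bump k i) 0%N * u^-1 * c k j.+1.
  have [mu [[l [Hl Hmu]] Hsum]] := IH n c' Hn'.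
  pose S0 := \sum_(i < n) mu i * c (bump k i) 0%N.
  exists (fun i : nat => if i == val k then - S0 * u^-1 else mu (unbump k i)).
  split.
    exists (bump k l); split.
      by rewrite /bump; case: (k <= l)%N => /=; rewrite ?add0n ?add1n // ltnW.
    have /negPf -> : bump k l != k by rewrite eq_sym neq_bump.
    by rewrite bumpK.
  have Hsplit j : \sum_(i < n.+1) (if (val i == val k)%N then - S0 * u^-1 else mu (unbump k i)) * c i j
      = - S0 * u^-1 * c k j + \sum_(i < n) mu i * c (bump k i) j.
    rewrite (bigD1_ord k) //= eqxx; congr (_ + _); apply: eq_bigr => i _.
    have /negPf -> : bump k i != k by rewrite eq_sym neq_bump.
    by rewrite bumpK.
  case=> [|j] Hj; rewrite Hsplit.
    have -> : - S0 * u^-1 * c k 0%N + S0 = 0.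
      by rewrite -mulrA mulVr ?mulr1 ?addNr.
    exact: maxid0.
  suff -> : - S0 * u^-1 * c k j.+1 + \sum_(i < n) mu i * c (bump k i) j.+1
           = \sum_(i < n) mu i * c' i j by apply: Hsum.
  rewrite /c' /S0.
  under [X in _ = X]eq_bigr do rewrite mulrBr mulrA [_ * (_ * _)]mulrA.
  rewrite sumrB -!mulr_suml; ring.
have Hn' : (d < n)%N by apply: ltnW.
have [lam [Hk Hsum]] := IH n (fun i j => c i j.+1) Hn'.
exists lam; split => // -[|j] Hj; last by apply: Hsum.
apply: (maxid_sum Hloc) => i; apply: maxidMl.
by move: Hex; rewrite negb_exists => /forallP /(_ i).
Qed.

Lemma reduce (R : comUnitRingType) (Hloc : local_ring R) (p q : R) (dz : nat) (zs : nat -> R) :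
  maxid q ->
  (forall y, y * p = 0 -> exists r, y = r * q) ->
  (forall x, maxid x -> exists c : nat -> R, x * p = \sum_(j < dz) c j * zs j) ->
  (forall j y, (j < dz)%N -> maxid y -> y * zs j = 0) ->
  forall n (f : nat -> R), (forall i, (i < n)%N -> maxid (f i)) ->
  (forall x, maxid x <-> gb q n f x) ->
  exists n' g, (n' <= dz)%N /\ (forall x, maxid x <-> gb q n' g x).
Proof.
move=> Hq Hann Hmp Hkill n; elim: n => [|n IH] f Hf Hgb.
  by exists 0%N, f.
case: (leqP n.+1 dz) => Hnd; first by exists n.+1, f.
have [c Hc] : exists c : nat -> nat -> R, forall i, (i < n.+1)%N ->
    f i * p = \sum_(j < dz) c i j * zs j.
  have H : forall i, exists ci : nat -> R, (i < n.+1)%N -> f i * p = \sum_(j < dz) ci j * zs j.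
    move=> i; case: (ltnP i n.+1) => Hi.
      by have [ci Hci] := Hmp _ (Hf i Hi); exists ci.
    by exists (fun _ => 0).
  have [c Hc] := functional_choice _ H; by exists c.
have [lam [[k0 [Hk0 Hu]] Hlam]] := elim_lemma Hloc c Hnd.
set k : 'I_n.+1 := Ordinal Hk0.
have Hrel : (\sum_(i < n.+1) lam i * f i) * p = 0.
  rewrite mulr_suml.
  under eq_bigr => i _ do rewrite -mulrA (Hc i (ltn_ord i)) mulr_sumr.
  rewrite exchange_big /= big1 // => j _.
  under eq_bigr do rewrite mulrA.
  by rewrite -mulr_suml; apply: (Hkill) => //; exact: Hlam (ltn_ord j).
have [r Hr] := Hann _ Hrel.
set u := lam k0.
pose f' i := f (bump k0 i).
pose S2 := \sum_(i < n) lam (bump k0 i) * f' i.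
have Hfk : f k0 = u^-1 * (r * q - S2).
  rewrite -Hr (bigD1_ord k) //= addrK.
  by rewrite mulKr.
have Hf' : forall i, (i < n)%N -> maxid (f' i).
  move=> i Hi; apply: Hf.
  by rewrite /bump; case: (k0 <= i)%N => /=; rewrite ?add0n ?add1n // ltnW.
apply: (IH f' Hf') => x; split; last first.
  by move/(gb_maxid Hloc Hq Hf').
move=> /Hgb [b [c' ->]].
exists (b + c' k0 * u^-1 * r), (fun i => c' (bump k0 i) - c' k0 * u^-1 * lam (bump k0 i)).
rewrite (bigD1_ord k) //= Hfk.
have -> : \sum_(i < n) (c' (bump k0 i) - c' k0 * u^-1 * lam (bump k0 i)) * f' i
   = \sum_(i < n) c' (bump k0 i) * f' i - c' k0 * u^-1 * S2.
  rewrite /S2 mulr_sumr -sumrB; apply: eq_bigr => i _; ring.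
rewrite /f'; ring.
Qed.

Lemma main_bound (R : comUnitRingType) (Hloc : local_ring R) (p q : R) (dz : nat) (zs : nat -> R) e :
  maxid q ->
  (forall y, y * p = 0 -> exists r, y = r * q) ->
  (forall x, maxid x -> exists c : nat -> R, x * p = \sum_(j < dz) c j * zs j) ->
  (forall j y, (j < dz)%N -> maxid y -> y * zs j = 0) ->
  min_gens (@maxid R) e -> (e <= dz.+1)%N.
Proof.
move=> Hq Hann Hmp Hkill [[s [Hs Hgen]] Hmin].
have Hf : forall i, (i < size s)%N -> maxid (nth 0 s i).
  by move=> i Hi; apply/Hgen; apply: gen_nth.
have Hgb : forall x, maxid x <-> gb q (size s) (nth 0 s) x.
  move=> x; split.
    by move/Hgen/gen_nat => [c ->]; exists 0, c; rewrite mul0r add0r.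
  exact: (gb_maxid Hloc Hq Hf).
have [n' [g [Hn' Hg]]] := reduce Hloc Hq Hann Hmp Hkill Hf Hgb.
have := Hmin (q :: mkseq g n') => /(_ _) H.
have : (e <= size (q :: mkseq g n'))%N.
  by apply: H => x; rewrite gen_gb.
by rewrite /= size_mkseq => /leq_trans; apply.
Qed.

Lemma ezd_nz (R : comUnitRingType) (a : R) : exact_zero_divisor a -> a <> 0.
Proof. by move=> [H _] Ha; apply: H => x; rewrite /ann Ha mulr0. Qed.

Lemma ann_unit (R : comUnitRingType) (a b : R) : a <> 0 -> b * a = 0 -> maxid b.
Proof.
move=> Ha Hba; apply/negP => Hb; apply: Ha.
by rewrite -(mulKr Hb a) Hba mulr0.
Qed.

Lemma sum_nat (R : comUnitRingType) (s : seq R) (c : 'I_(size s) -> R) :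
  exists c' : nat -> R, \sum_(i < size s) c i * s`_i = \sum_(i < size s) c' i * s`_i.
Proof.
exists (fun i => match insub i with Some o => c o | None => 0 end).
apply: eq_bigr => i _; case: insubP => [o _ /val_inj -> //|]; by rewrite ltn_ord.
Qed.

Lemma sq_nat (R : comUnitRingType) n (s : seq R) :
  spans_quot n s <-> (forall i, (i < size s)%N -> mpow n s`_i) /\
    (forall y : R, mpow n y -> exists c : nat -> R, mpow n.+1 (y - \sum_(i < size s) c i * s`_i)).
Proof.
split; move=> [H1 H2]; split => // y /H2 [c Hc].
  by have [c' Hc'] := sum_nat c; exists c'; rewrite -Hc'.
by exists (fun i => c (val i)).
Qed.

Theorem lemma2p4 (R : comUnitRingType) (e : nat) :
  local_ring R -> noetherian R ->
  (forall x : R, @mpow R 4 x -> x = 0) ->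
  min_gens (@maxid R) e -> (3 <= e)%N ->
  ((exists h : nat -> nat,
       (forall n, (n < 4)%N -> @rank_quot R n (h n)) /\
       \sum_(n < 4) (-1) ^+ n * (h n)%:Z = 0) ->
    forall a b : R, exact_zero_divisor a -> @maxid R a -> ~ @mpow R 2 a ->
      compl_divisor a b -> @maxid R b /\ ~ @mpow R 2 b)
  /\
  (forall d3 : nat, min_gens (@mpow R 3) d3 -> (d3 + 2 <= e)%N ->
    forall a : R, exact_zero_divisor a -> a <> 0 -> ~ @mpow R 2 a).
Proof.
move=> Hloc _ H4 Hmin He; split.
  move=> [h [Hrk Hsum]] a b Hez Ha Ha2 [Hab Hba].
  have Hb : maxid b.
    apply: (ann_unit (ezd_nz Hez)); apply/Hab; apply/gen1; exists 1; by rewrite mul1r.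
  split => // Hb2.
  have Hh0 : (h 0%N <= 1)%N.
    have [_ Hm] := Hrk 0%N isT; apply: (Hm [:: 1]); split.
      case=> // _; exists 1%N, (fun _ => 1), (fun _ _ => 0); split.
        by move=> _ [].
      by rewrite big_ord1 big_ord0 mulr1.
    move=> y _; exists (fun _ => y); rewrite big_ord1 /= mulr1 subrr; exact: mpow0.
  have Hh21 : (h 2%N <= h 1%N)%N.
    have [[s [Hs /sq_nat [Hs1 Hs2]]] _] := Hrk 1%N isT.
    have [_ Hm] := Hrk 2%N isT; rewrite -Hs -(size_mkseq (fun i => a * s`_i) (size s)).
    apply: Hm; apply/sq_nat; split.
      move=> i; rewrite size_mkseq => Hi; rewrite nth_mkseq //.
      exact: mpowM1 (Hs1 _ Hi).
    move=> y Hy.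
    have [r Hr] : exists r, y = r * a by apply/gen1; apply/Hba; exact: mpow_kill.
    have Hrm : maxid r.
      apply/negP => Hru; apply: Ha2; rewrite -(mulKr Hru a) -Hr; exact: mpowZ.
    have [c Hc] := Hs2 r (maxid_mpow1 Hrm).
    exists c.
    rewrite size_mkseq.
    have -> : y - \sum_(i < size s) c i * (mkseq (fun i => a * s`_i) (size s))`_i
      = a * (r - \sum_(i < size s) c i * s`_i).
      rewrite mulrBr mulr_sumr Hr mulrC; congr (_ - _).
      apply: eq_bigr => i _; rewrite nth_mkseq //; ring.
    exact: mpowM1.
  have Hh3 : (h 3%N <= 1)%N.
    move: Hsum; rewrite !big_ord_recr big_ord0 /=.
    rewrite (_ : (-1:int)^+2 = 1) // (_ : (-1:int)^+3 = -1) // expr0 expr1 => Hs.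
    lia.
  have [[s3 [Hs3 /sq_nat [Hs31 Hs32]]] _] := Hrk 3%N isT.
  have : (e <= (size s3).+1)%N.
    apply: (main_bound Hloc (p := b) (q := a) (dz := size s3) (zs := nth 0 s3)) => //.
    - by move=> y /(Hba y) /gen1.
    - move=> x Hx; have [c Hc] := Hs32 _ (mpowM1 Hx Hb2).
      exists c; apply/eqP; rewrite -subr_eq0; apply/eqP; exact: H4.
    - move=> j y Hj Hy; apply: H4; exact: mpowM1 (Hs31 _ Hj).
  lia.
move=> d3 [[z [Hz Hgz]] _] Hd3 a Hez Ha0 Ha2.
have [_ [_ [phi [Hadd [Hlin [Himg Hker]]]]]] := Hez.
set b := phi 1.
have Hann : forall y, y * a = 0 -> exists r, y = r * b.
  move=> y Hy; have [x Hx] := (proj2 (Himg y)) Hy.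
  by exists x; rewrite -Hx -{1}(mulr1 x) Hlin.
have Hb : maxid b.
  apply: (ann_unit Ha0); apply: (proj1 (Himg b)); by exists 1.
have : (e <= (size z).+1)%N.
  apply: (main_bound Hloc (p := a) (q := b) (dz := size z) (zs := nth 0 z)) => //.
  - move=> x Hx; have /Hgz/gen_nat [c Hc] := mpowM1 Hx Ha2; by exists c.
  - move=> j y Hj Hy; apply: H4; apply: mpowM1 => //; apply/Hgz; exact: gen_nth.
lia.
Qed.
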